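(* Let $n\ge2$ and let $A\in\mathbb{R}^{n\times n}$ be conditionally negative definite. Let $\overline{A}=\frac12(A+A^T)$ and let $\lambda_2$ be the second largest eigenvalue (counting multiplicity) of $$D=\overline{A}-\frac1n\overline{A}\mathbf{1}\mathbf{1}^T-\frac1n\mathbf{1}\mathbf{1}^T\overline{A}+\frac{\mathbf{1}^TA\mathbf{1}}{n^2}\mathbf{1}\mathbf{1}^T.$$ Then $$\max_{\mathbf{x}\in\mathbb{R}^n,\ \mathbf{x}^T\mathbf{1}=0,\ \mathbf{x}\ne\mathbf{0}}\frac{\mathbf{x}^TA\mathbf{x}}{\mathbf{x}^T\mathbf{x}}=\lambda_2<0.$$
   Context: $\mathbf{1}\in\mathbb{R}^n$ is the all-ones vector. $A$ is conditionally negative definite if $\mathbf{y}^TA\mathbf{y}<0$ for all nonzero $\mathbf{y}\in\mathbb{R}^n$ with $\mathbf{1}^T\mathbf{y}=0$. *)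

(* Defs.v *)
From HB Require Import structures.
From mathcomp Require Import all_boot all_order all_algebra.
Set Implicit Arguments.
Unset Strict Implicit.
Unset Printing Implicit Defensive.
Import Order.TTheory GRing.Theory Num.Theory.
Local Open Scope ring_scope.

Definition ones (R : ringType) (n : nat) : 'cV[R]_n := const_mx 1.

Definition qform (R : ringType) (n : nat) (A : 'M[R]_n) (y : 'cV[R]_n) : R :=
  (y^T *m A *m y) 0 0.

Definition cond_neg_def (R : realDomainType) (n : nat) (A : 'M[R]_n) : Prop :=
  forall y : 'cV[R]_n, y != 0 -> (ones R n)^T *m y = 0 -> qform A y < 0.

Definition symm_part (R : fieldType) (n : nat) (A : 'M[R]_n) : 'M[R]_n :=
  (2%:R)^-1 *: (A + A^T).

Definition Dmat (R : fieldType) (n : nat) (A : 'M[R]_n) : 'M[R]_n :=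
  let Ab := symm_part A in
  let J := ones R n *m (ones R n)^T in
  Ab - (n%:R)^-1 *: (Ab *m J) - (n%:R)^-1 *: (J *m Ab)
     + ((((ones R n)^T *m A *m ones R n) 0 0) / (n%:R ^+ 2)) *: J.

(* s is the list of eigenvalues of M counted with (algebraic) multiplicity:
   the characteristic polynomial of M splits as prod_(x <- s) (X - x). *)
Definition eigenvalues_list (R : comRingType) (n : nat) (M : 'M[R]_n)
  (s : seq R) : Prop :=
  char_poly M = \prod_(x <- s) ('X - x%:P).

Definition second_largest (R : realDomainType) (s : seq R) : R :=
  nth 0 (sort (>=%R) s) 1.

(* Main.v *)
Require Import Defs.
From HB Require Import structures.
From mathcomp Require Import all_boot all_order all_algebra.
From mathcomp Require Import complex ring lra spectral sesquilinear.
Import Order.TTheory GRing.Theory Num.Theory Num.Def.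
Local Open Scope ring_scope.
Set Implicit Arguments.
Unset Strict Implicit.
Unset Printing Implicit Defensive.

Section P0.
Variable (R : rcfType) (n : nat) (A : 'M[R]_n).
Hypothesis n_gt0 : (0 < n)%N.
Local Notation J := (ones R n *m (ones R n)^T).

Lemma ones_sym : (ones R n)^T^T = ones R n. Proof. by rewrite trmxK. Qed.

Lemma symm_part_tr : (symm_part A)^T = symm_part A.
Proof. by rewrite /symm_part linearZ /= linearD /= trmxK addrC. Qed.

Lemma J_tr : J^T = J.
Proof. by rewrite trmx_mul trmxK. Qed.

Lemma Dmat_tr : (Dmat A)^T = Dmat A.
Proof.
rewrite /Dmat; move: (symm_part_tr) (J_tr).
move: (symm_part A) (ones R n *m _) => Ab Jm hAb hJ.
rewrite !linearD /= !linearN /= !linearZ /= !trmx_mul hAb hJ.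
rewrite -!addrA; congr (_ + _); rewrite !addrA.
by rewrite (addrC (_ *: - (Jm *m Ab))).
Qed.

Lemma onesTones : (ones R n)^T *m ones R n = (n%:R)%:M.
Proof.
apply/matrixP => i j; rewrite !mxE (ord1 i) (ord1 j) /=.
rewrite (eq_bigr (fun _ => 1)); last by move=> k _; rewrite !mxE mulr1.
by rewrite sumr_const card_ord.
Qed.

Lemma qform_D y : (ones R n)^T *m y = 0 -> qform (Dmat A) y = qform A y.
Proof.
move=> hy.
have hy' : y^T *m ones R n = 0 by rewrite -[y^T *m _]trmxK trmx_mul trmxK hy trmx0.
rewrite /qform /Dmat /symm_part.
rewrite ?(mulmxDr, mulmxN, mulmxDl, mulNmx, mulmxBr, mulmxBl, =^~ scalemxAr, =^~ scalemxAl).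
rewrite !mulmxA hy' !mul0mx -!mulmxA hy !mulmx0 !scaler0 ?(scaler0, subr0, addr0, oppr0).
have -> : y^T *m (A^T *m y) = y^T *m (A *m y).
  have -> : y^T *m (A^T *m y) = (y^T *m (A *m y))^T.
    by rewrite !trmx_mul trmxK mulmxA.
  by apply/matrixP => i j; rewrite !ord1 mxE.
rewrite -mulr2n -scaler_nat scalerA mulVf ?scale1r //.
by rewrite pnatr_eq0.
Qed.
Lemma qsym (y : 'cV[R]_n) : (y^T *m (symm_part A *m y)) 0 0 = (y^T *m (A *m y)) 0 0.
Proof.
rewrite /symm_part -scalemxAl -scalemxAr mulmxDl mulmxDr.
have -> : y^T *m (A^T *m y) = (y^T *m (A *m y))^T.
  by rewrite !trmx_mul trmxK mulmxA.
have -> : (y^T *m (A *m y))^T = y^T *m (A *m y).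
  by apply/matrixP => i j; rewrite !ord1 mxE.
rewrite -mulr2n -scaler_nat scalerA mulVf ?scale1r //.
by rewrite pnatr_eq0.
Qed.

Lemma Dmat_ones : Dmat A *m ones R n = 0.
Proof.
have hn : (n%:R : R) != 0 by rewrite pnatr_eq0 -lt0n.
rewrite /Dmat; have hq := qsym; move: (symm_part A) hq => Ab hq.
rewrite ?(mulmxDl, mulNmx, =^~ scalemxAl).
rewrite -!mulmxA onesTones !mul_mx_scalar -!scalemxAr.
rewrite [(ones R n)^T *m (Ab *m ones R n)]mx11_scalar mul_mx_scalar.
rewrite hq !scalerA mulVf // scale1r addrN add0r.

rewrite -scaleNr -scalerDl; apply/eqP; rewrite scaler_eq0; apply/orP; left.
apply/eqP; field.
by rewrite hn.
Qed.
End P0.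
Section P1.
Variable (R : rcfType) (n : nat) (M : 'M[R]_n).
Hypothesis Msym : M^T = M.
Local Notation C := (R[i]).
Local Notation f := (real_complex R).
Definition Mc : 'M[C]_n := map_mx f M.

Lemma conjC_real (x : R) : conjC (f x) = f x.
Proof. exact: conjc_real. Qed.

Lemma Mc_tc : (Mc ^t conjC)%sesqui = Mc.
Proof.
apply/matrixP => i j; rewrite !mxE conjC_real.
by have /matrixP/(_ i j) := Msym; rewrite mxE => ->.
Qed.

Lemma Mc_herm : Mc \is hermsymmx.
Proof. by rewrite is_hermitianmxE expr0 scale1r Mc_tc. Qed.

Lemma Mc_normal : Mc \is normalmx.
Proof. by apply/normalmxP; rewrite Mc_tc. Qed.


Lemma char_poly_similar (F : fieldType) m (P B : 'M[F]_m) : P \in unitmx ->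
  char_poly (invmx P *m B *m P) = char_poly B.
Proof.
move=> Pu; rewrite /char_poly /char_poly_mx.
set Q := map_mx polyC (invmx P); set Pp := map_mx polyC P.
have QP : Q *m Pp = 1%:M by rewrite -map_mxM mulVmx // map_mx1.
have hX : 'X%:M = Q *m 'X%:M *m Pp :> 'M[{poly F}]_m.
  by rewrite -mulmxA -scalar_mxC mulmxA QP mul1mx.
rewrite {1}hX.
rewrite !map_mxM -/Q -/Pp -mulmxBl -mulmxBr !det_mulmx mulrAC -det_mulmx QP.
by rewrite det1 mul1r.
Qed.

Local Open Scope sesquilinear_scope.
Definition U := spectralmx Mc.
Definition dd := spectral_diag Mc.

Lemma U_unitary : U *m U ^t* = 1%:M.
Proof. exact/unitarymxP/spectral_unitarymx. Qed.

Lemma U_inv : U ^t* *m U = 1%:M.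
Proof.
by rewrite -invmx_unitary ?spectral_unitarymx // mulVmx // spectral_unit.
Qed.

Lemma Mc_decomp : Mc = U ^t* *m diag_mx dd *m U.
Proof.
rewrite -invmx_unitary ?spectral_unitarymx //.
exact/orthomx_spectralP/Mc_normal.
Qed.

Definition r (k : 'I_n) : R := complex.Re (dd 0 k).

Lemma dd_real k : dd 0 k = f (r k).
Proof.
have /mxOverP/(_ 0 k) := hermitian_spectral_diag_real Mc_herm.
by move=> /RRe_real.
Qed.

Lemma char_poly_M :
  char_poly M = \prod_(x <- [seq r k | k <- enum 'I_n]) ('X - x%:P).
Proof.
apply: (@map_poly_inj _ _ f).
rewrite map_char_poly -/Mc Mc_decomp -invmx_unitary ?spectral_unitarymx //.
rewrite char_poly_similar ?spectral_unit // char_poly_trig ?diag_mx_is_trig //.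
rewrite rmorph_prod big_map big_enum /=.
by apply: eq_bigr => k _; rewrite map_polyXsubC mxE eqxx mulr1n dd_real.
Qed.

Lemma qformE (y : 'cV[R]_n) :
  qform M y = \sum_j \sum_i y i 0 * M i j * y j 0.
Proof.
rewrite /qform mxE; apply: eq_bigr => j _; rewrite mxE big_distrl /=.
by apply: eq_bigr => i _; rewrite !mxE.
Qed.

Definition qc (z : 'rV[C]_n) : C := (z *m Mc *m z ^t*) 0 0.

Lemma qcE z : qc z = \sum_j \sum_i z 0 i * f (M i j) * conjC (z 0 j).
Proof.
rewrite /qc mxE; apply: eq_bigr => j _; rewrite mxE big_distrl /=.
by apply: eq_bigr => i _; rewrite !mxE.
Qed.

Lemma term_id (u v : C) (m : R) :
  u * f m * conjC v =
  f (m * (complex.Re u * complex.Re v + complex.Im u * complex.Im v)) +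
  'i%C * f (m * (complex.Im u * complex.Re v - complex.Re u * complex.Im v)).
Proof.
case: u => a b; case: v => c d /=.
apply/eqP; rewrite eq_complex /=; apply/andP; split; apply/eqP; ring.
Qed.

Lemma f_sum (F : 'I_n -> R) : \sum_i f (F i) = f (\sum_i F i).
Proof. by rewrite rmorph_sum. Qed.

Lemma qc_split z :
  qc z = f (qform M (\col_i complex.Re (z 0 i)) + qform M (\col_i complex.Im (z 0 i))).
Proof.
rewrite qcE (eq_bigr (fun j => \sum_i (f (M i j * (complex.Re (z 0 i) * complex.Re (z 0 j)
   + complex.Im (z 0 i) * complex.Im (z 0 j))) + 'i%C * f (M i j *
   (complex.Im (z 0 i) * complex.Re (z 0 j) - complex.Re (z 0 i) * complex.Im (z 0 j)))))); last first.
  by move=> j _; apply: eq_bigr => i _; rewrite term_id.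
rewrite (eq_bigr (fun j => \sum_i f (M i j * (complex.Re (z 0 i) * complex.Re (z 0 j)
   + complex.Im (z 0 i) * complex.Im (z 0 j))) + 'i%C * f (\sum_i M i j *
   (complex.Im (z 0 i) * complex.Re (z 0 j) - complex.Re (z 0 i) * complex.Im (z 0 j)))));
   last by move=> j _; rewrite big_split /= rmorph_sum mulr_sumr.
rewrite big_split /= -mulr_sumr -!rmorph_sum.
have -> : \sum_j \sum_i M i j * (complex.Im (z 0 i) * complex.Re (z 0 j) -
     complex.Re (z 0 i) * complex.Im (z 0 j)) = 0.
  rewrite (eq_bigr (fun j => \sum_i M i j * complex.Im (z 0 i) * complex.Re (z 0 j) -
     \sum_i M i j * complex.Re (z 0 i) * complex.Im (z 0 j))); last first.
    by move=> j _; rewrite -sumrB; apply: eq_bigr => i _; rewrite mulrBr !mulrA.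
  rewrite sumrB exchange_big /=; apply/eqP; rewrite subr_eq0; apply/eqP.
  apply: eq_bigr => i _; apply: eq_bigr => j _.
  have /matrixP/(_ i j) := Msym; rewrite mxE => ->; ring.
rewrite rmorph0 mulr0 addr0 !qformE -big_split /=.
under eq_bigr do rewrite f_sum.
rewrite f_sum.
apply/eqP; rewrite eq_complex /= eqxx andbT; apply/eqP.
apply: eq_bigr => j _; rewrite -big_split /=; apply: eq_bigr => i _.
rewrite !mxE; ring.
Qed.

Hypothesis Mneg : forall y : 'cV[R]_n, y != 0 -> (ones R n)^T *m y = 0 -> qform M y < 0.

Lemma qform_le0 y : (ones R n)^T *m y = 0 -> qform M y <= 0.
Proof.
move=> hy; have [->|y0] := eqVneq y 0.
  by rewrite /qform trmx0 !mul0mx mxE.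
exact/ltW/Mneg.
Qed.

Lemma Re_sum (F : 'I_n -> C) : complex.Re (\sum_i F i) = \sum_i complex.Re (F i).
Proof. by apply: (big_morph _ (id1 := 0) (op1 := +%R)) => // [[a b] [c d]]. Qed.

Lemma Im_sum (F : 'I_n -> C) : complex.Im (\sum_i F i) = \sum_i complex.Im (F i).
Proof. by apply: (big_morph _ (id1 := 0) (op1 := +%R)) => // [[a b] [c d]]. Qed.

Lemma qc_neg z : z != 0 -> z *m map_mx f (ones R n) = 0 -> qc z < 0.
Proof.
move=> z0 hz.
set a := \col_i complex.Re (z 0 i); set b := \col_i complex.Im (z 0 i).
have hs : \sum_i z 0 i = 0.
  move/matrixP/(_ 0 0): hz; rewrite !mxE => H; rewrite -[RHS]H.
  by apply: eq_bigr => i _; rewrite !mxE mulr1.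
have ha : (ones R n)^T *m a = 0.
  apply/matrixP => i j; rewrite !ord1 !mxE -[RHS]/(complex.Re (0 : C)) -hs Re_sum.
  by apply: eq_bigr => k _; rewrite !mxE mul1r.
have hb : (ones R n)^T *m b = 0.
  apply/matrixP => i j; rewrite !ord1 !mxE -[RHS]/(complex.Im (0 : C)) -hs Im_sum.
  by apply: eq_bigr => k _; rewrite !mxE mul1r.
rewrite qc_split -/a -/b -[0 : C]/(f 0) ltcR.
have [a0|a0] := eqVneq a 0.
  have b0 : b != 0.
    apply: contra z0 => /eqP Hb; apply/eqP/rowP => j.
    move/matrixP/(_ j 0): a0; move/matrixP/(_ j 0): Hb; rewrite !mxE.
    by case: (z 0 j) => x y /= -> ->.
  have := Mneg b0 hb; have := qform_le0 ha; lra.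
have := Mneg a0 ha; have := qform_le0 hb; lra.
Qed.

Lemma tc_mul (z : 'rV[C]_n) : (z *m U ^t*) ^t* = U *m z ^t*.
Proof. by rewrite trmx_mul map_mxM trmxCK. Qed.

Lemma qc_diag z : qc z =
  \sum_k f (r k) * ((z *m U ^t*) 0 k * conjC ((z *m U ^t*) 0 k)).
Proof.
rewrite /qc Mc_decomp !mulmxA -(mulmxA _ U) -tc_mul mxE.
apply: eq_bigr => k _; rewrite mul_mx_diag !mxE dd_real; ring.
Qed.

Lemma norm_rowE (v : 'rV[C]_n) : (v *m v ^t*) 0 0 = \sum_k v 0 k * conjC (v 0 k).
Proof. by rewrite mxE; apply: eq_bigr => k _; rewrite !mxE. Qed.

Lemma norm_U (z : 'rV[C]_n) : (z *m z ^t*) 0 0 = ((z *m U ^t*) *m (z *m U ^t*) ^t*) 0 0.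
Proof. by rewrite tc_mul mulmxA -(mulmxA z) U_inv mulmx1. Qed.

Lemma sum_delta (X : 'I_n -> C) k : \sum_m (m == k)%:R * X m = X k.
Proof.
rewrite (bigD1 k) //= eqxx mul1r big1 ?addr0 // => m /negbTE ->.
by rewrite mul0r.
Qed.

Lemma two_nonneg k l : k != l -> 0 <= r k -> 0 <= r l -> False.
Proof.
move=> kl rk rl.
set c := U *m map_mx f (ones R n).
suff [al [be [hab hne]]] : exists al be : C, al * c k 0 = be * c l 0 /\ (al != 0 \/ be != 0).
  set w := \row_m ((m == k)%:R * al - (m == l)%:R * be).
  set z := w *m U.
  have hzw : z *m U ^t* = w by rewrite /z -mulmxA U_unitary mulmx1.
  have w0 : w != 0.
    case: hne => h; apply: contraNneq h => /rowP H.
      by move: (H k); rewrite !mxE eqxx (negbTE kl) mul1r mul0r subr0 => ->.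
    move: (H l); rewrite !mxE eqxx eq_sym (negbTE kl) mul1r mul0r sub0r => /eqP.
    by rewrite oppr_eq0.
  have z0 : z != 0.
    by apply: contra w0 => /eqP hz; rewrite -hzw hz mul0mx.
  have hz1 : z *m map_mx f (ones R n) = 0.
    rewrite /z -mulmxA -/c; apply/matrixP => i j; rewrite !ord1 !mxE.
    rewrite (eq_bigr (fun m => (m == k)%:R * (al * c m 0) - (m == l)%:R * (be * c m 0))).
      by rewrite sumrB !sum_delta hab subrr.
    by move=> m _; rewrite !mxE; ring.
  have := qc_neg z0 hz1; rewrite qc_diag hzw => Hlt.
  suff Hge : 0 <= \sum_k0 f (r k0) * (w 0 k0 * conjC (w 0 k0)).
    by have := le_lt_trans Hge Hlt; rewrite ltxx.
  apply: sumr_ge0 => m _.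
  have [->|mk] := eqVneq m k.
    by apply: mulr_ge0; [rewrite -[0 : C]/(f 0) lecR | exact: mul_conjC_ge0].
  have [->|ml] := eqVneq m l.
    by apply: mulr_ge0; [rewrite -[0 : C]/(f 0) lecR | exact: mul_conjC_ge0].
  by rewrite !mxE (negbTE mk) (negbTE ml) !mul0r subr0 mul0r mulr0.
have [ck|ck] := eqVneq (c k 0) 0.
  by exists 1, 0; rewrite ck !mul0r mulr0; split => //; left; exact: oner_neq0.
by exists (c l 0), (c k 0); split; [rewrite mulrC | right].
Qed.

Lemma qc_real (y : 'cV[R]_n) : qc (map_mx f y^T) = f (qform M y).
Proof.
rewrite qc_split.
have -> : \col_i complex.Re ((map_mx f y^T) 0 i) = y.
  by apply/matrixP => i j; rewrite !mxE (ord1 j).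
have -> : \col_i complex.Im ((map_mx f y^T) 0 i) = 0.
  by apply/matrixP => i j; rewrite !mxE.
by rewrite /qform trmx0 !mul0mx (_ : (0 : 'M[R]_1) 0 0 = 0) ?addr0 // mxE.

Qed.

Lemma norm_real (y : 'cV[R]_n) :
  (map_mx f y^T *m (map_mx f y^T) ^t*) 0 0 = f ((y^T *m y) 0 0).
Proof.
rewrite norm_rowE mxE rmorph_sum; apply: eq_bigr => k _.
by rewrite !mxE conjC_real rmorphM.
Qed.

Hypothesis Mones : M *m ones R n = 0.
Variable k0 : 'I_n.
Hypothesis rk0 : r k0 = 0.

Lemma r_neg k : k != k0 -> r k < 0.
Proof.
move=> kk0; rewrite ltNge; apply/negP => hk.
by apply: (two_nonneg kk0 hk); rewrite rk0.
Qed.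

Lemma c_zero k : k != k0 -> (U *m map_mx f (ones R n)) k 0 = 0.
Proof.
move=> kk0.
set o := map_mx f (ones R n)^T.
have hq : qc o = 0.
  by rewrite qc_real /qform -mulmxA Mones mulmx0 mxE.
have hc : U *m map_mx f (ones R n) = (o *m U ^t*) ^t*.
  rewrite tc_mul; congr (_ *m _); apply/matrixP => i j.
  by rewrite !mxE conjC_real.
rewrite hc mxE; apply/eqP; rewrite mxE conjC_eq0.
move: hq; rewrite qc_diag => hq.
have hle : forall m, 0 <= - (f (r m) * ((o *m U ^t*) 0 m * conjC ((o *m U ^t*) 0 m))).
  move=> m; rewrite oppr_ge0; apply: mulr_le0_ge0; last exact: mul_conjC_ge0.
  rewrite -[0 : C]/(f 0) lecR; have [->|mk] := eqVneq m k0; first by rewrite rk0.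
  exact/ltW/r_neg.
have /psumr_eq0P H : \sum_m - (f (r m) * ((o *m U ^t*) 0 m * conjC ((o *m U ^t*) 0 m))) = 0.
  by rewrite sumrN hq oppr0.
have := H (fun m _ => hle m) k isT => /eqP; rewrite oppr_eq0 mulf_eq0 => /orP[|].
  rewrite -[0 : C]/(f 0) => /eqP /complexI hk.
  by have := r_neg kk0; rewrite hk ltxx.
by rewrite mul_conjC_eq0.
Qed.

Hypothesis n_gt0 : (0 < n)%N.

Lemma w_k0 (x : 'cV[R]_n) : x^T *m ones R n = 0 ->
  ((map_mx f x^T) *m U ^t*) 0 k0 = 0.
Proof.
move=> hx.
set c := U *m map_mx f (ones R n).
set w := (map_mx f x^T) *m U ^t*.
have hwc : w *m c = 0.
  by rewrite /w /c mulmxA -(mulmxA _ _ U) U_inv mulmx1 -map_mxM hx map_mx0.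
have : (w *m c) 0 0 = w 0 k0 * c k0 0.
  rewrite mxE (bigD1 k0) //= big1 ?addr0 // => m mk0.
  by rewrite c_zero ?mulr0.
rewrite hwc mxE => /esym /eqP; rewrite mulf_eq0 => /orP[/eqP //|ck0].
exfalso.
have c0 : c = 0.
  apply/matrixP => i j; rewrite (ord1 j) [RHS]mxE.
  by have [->|ik] := eqVneq i k0; [exact/eqP | exact: c_zero].
have : map_mx f (ones R n) = 0.
  by rewrite -[map_mx f _]mul1mx -U_inv -mulmxA -/c c0 mulmx0.
move/matrixP/(_ (Ordinal n_gt0) 0); rewrite !mxE.
by move/complexI/eqP; rewrite oner_eq0.
Qed.

Lemma rayleigh (x : 'cV[R]_n) (t1 : R) : x^T *m ones R n = 0 ->
  (forall k, k != k0 -> r k <= t1) -> qform M x <= t1 * (x^T *m x) 0 0.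
Proof.
move=> hx ht.
have fM (a b : R) : f (a * b) = f a * f b by rewrite rmorphM.
rewrite -lecR fM -qc_real -norm_real norm_U norm_rowE qc_diag mulr_sumr.
apply: ler_sum => k _.
have [->|kk0] := eqVneq k k0.
  by rewrite w_k0 // mul0r !mulr0.
by apply: ler_wpM2r; [exact: mul_conjC_ge0 | rewrite lecR; exact: ht].
Qed.
End P1.

Lemma xx_pos (R : rcfType) n (x : 'cV[R]_n) : x != 0 -> 0 < (x^T *m x) 0 0.
Proof.
move=> x0.
have /existsP [k hk] : [exists k, x k 0 != 0].
  apply: contraR x0 => /existsPn H; apply/eqP/matrixP => i j.
  by rewrite (ord1 j) mxE; apply/eqP; move: (H i); rewrite negbK.
rewrite mxE (bigD1 k) //=.
have h1 : 0 < x^T 0 k * x k 0.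
  by rewrite mxE -expr2 lt0r sqr_ge0 andbT expf_neq0.
have h2 : 0 <= \sum_(i < n | i != k) x^T 0 i * x i 0.
  by apply: sumr_ge0 => i _; rewrite mxE -expr2 sqr_ge0.
lra.
Qed.

Lemma count_le1 (R : rcfType) n (r : 'I_n -> R) (P : pred R) :
  (forall k l, P (r k) -> P (r l) -> k = l) ->
  (count P [seq r k | k <- enum 'I_n] <= 1)%N.
Proof.
move=> H; rewrite count_map.
case: (pickP (fun k => P (r k))) => [k0 hk0 | none].
  rewrite (@eq_count _ _ (pred1 k0)); last first.
    by move=> k /=; apply/idP/eqP => [hk | ->] //; exact: H.
  by rewrite count_uniq_mem ?enum_uniq // leq_b1.
by rewrite (eq_count none) count_pred0.
Qed.

Theorem lemma2p1 (R : rcfType) (n : nat) (A : 'M[R]_n) :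
  (2 <= n)%N -> cond_neg_def A ->
  (exists s : seq R, eigenvalues_list (Dmat A) s) /\
  (forall s : seq R, eigenvalues_list (Dmat A) s ->
     let lambda2 := second_largest s in
     [/\ (forall x : 'cV[R]_n, x != 0 -> x^T *m ones R n = 0 ->
            qform A x / (x^T *m x) 0 0 <= lambda2),
         (exists2 x : 'cV[R]_n, x != 0 /\ x^T *m ones R n = 0 &
            qform A x / (x^T *m x) 0 0 = lambda2)
       & lambda2 < 0]).
Proof.
move=> hn hA.
have n0 : (0 < n)%N by apply: leq_trans hn.
have Dsym : (Dmat A)^T = Dmat A := Dmat_tr A.
have Dones : Dmat A *m ones R n = 0 := Dmat_ones A n0.
have Dneg : forall y, y != 0 -> (ones R n)^T *m y = 0 -> qform (Dmat A) y < 0.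
  by move=> y y0 hy; rewrite qform_D //; apply: hA.
have hcp := char_poly_M Dsym.
split; first by exists [seq r (Dmat A) k | k <- enum 'I_n].
move=> s hs l2.
have hperm : perm_eq s [seq r (Dmat A) k | k <- enum 'I_n].
  by apply: prod_XsubC_eq; rewrite -hs hcp.
have hmemr : forall k, r (Dmat A) k \in s.
  by move=> k; rewrite (perm_mem hperm) map_f ?mem_enum.
have h0 : (0 : R) \in s.
  rewrite -root_prod_XsubC -hs -eigenvalue_root_char.
  apply/eigenvalueP; exists (ones R n)^T.
    by rewrite scale0r -{1}Dsym -trmx_mul Dones trmx0.
  apply/eqP => /matrixP/(_ 0 (Ordinal n0)); rewrite !mxE.
  by apply/eqP; exact: oner_neq0.
have [k0 hk0] : exists k0, r (Dmat A) k0 = 0.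
  by move: h0; rewrite (perm_mem hperm) => /mapP [k _ hk]; exists k.
have hcnt : (count (fun x : R => (0 <= x)%R) s <= 1)%N.
  rewrite (permP hperm); apply: count_le1 => k l hk hl.
  apply/eqP; apply: contraT => kl; exfalso; exact: (two_nonneg Dsym Dneg kl hk hl).
have tperm : perm_eq (sort (>=%R) s) s by rewrite perm_sort.
have tsort : sorted (>=%R) (sort (>=%R) s).
  by apply: sort_sorted => x y; exact: le_total.
have tsize : size (sort (>=%R) s) = n.
  by rewrite (perm_size tperm) (perm_size hperm) size_map size_enum_ord.
have l2E : l2 = nth 0 (sort (>=%R) s) 1 by [].
move: tperm tsort tsize l2E; case: (sort _ _) => [|t0 [|t1 rest]] /=.
- by move=> _ _ h; rewrite -h in hn.
- by move=> _ _ h; rewrite -h in hn.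
move=> tperm /andP [t10 tsort] _ l2E.
have hrest : all (fun y => y <= t1) rest.
  by apply: (order_path_min _ tsort) => y x z h1 h2; exact: le_trans h2 h1.
have hlt : t1 < 0.
  rewrite ltNge; apply/negP => h.
  move: hcnt; rewrite -(permP tperm) /= h (le_trans h t10) /=.
  by rewrite add1n ltnS add1n ltn0.
have hmem : forall x, x \in s -> x != 0 -> x <= t1.
  move=> x; rewrite -(perm_mem tperm) !inE => /orP [/eqP->|/orP [/eqP->|hx]] x0.
  - case: (leP t0 t1) => // lt; exfalso.
    move: h0; rewrite -(perm_mem tperm) !inE => /orP [/eqP h|/orP [/eqP h|h]].
    + by move: x0; rewrite h eqxx.
    + by move: hlt; rewrite -h ltxx.
    + by have := allP hrest 0 h; rewrite leNgt hlt.
  - by [].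
  - exact: (allP hrest).
rewrite l2E; split => //.
- move=> x x0 hx.
  have hx' : (ones R n)^T *m x = 0 by rewrite -[_ *m x]trmxK trmx_mul trmxK hx trmx0.
  rewrite ler_pdivrMr ?xx_pos // -qform_D //.
  apply: (rayleigh Dsym Dneg Dones hk0 n0 hx) => k kk0.
  apply: hmem (hmemr k) _.
  by rewrite (lt_eqF (r_neg Dsym Dneg hk0 kk0)).
- have : t1 \in s by rewrite -(perm_mem tperm) !inE eqxx orbT.
  rewrite -root_prod_XsubC -hs -eigenvalue_root_char => /eigenvalueP [v hv v0].
  have hv1 : v *m ones R n = 0.
    have : (v *m Dmat A) *m ones R n = 0 by rewrite -mulmxA Dones mulmx0.
    rewrite hv -scalemxAl => /eqP; rewrite scaler_eq0 => /orP [/eqP h|/eqP //].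
    by move: hlt; rewrite h ltxx.
  exists v^T.
    by split; [rewrite trmx_eq0 | rewrite trmxK].
  have hv1' : (ones R n)^T *m v^T = 0 by rewrite -trmx_mul hv1 trmx0.
  rewrite -qform_D // /qform trmxK hv -scalemxAl mxE.
  have : 0 < (v *m v^T) 0 0 by rewrite -{1}(trmxK v) xx_pos // trmx_eq0.
  by move=> hp; rewrite mulfK // gt_eqF.
Qed.
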